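(* A quasitopological group $G$ with identity $e$ is dense-connected if and only if $UV=G$ for all open neighborhoods $U$ and $V$ of $e$.
   Context: A quasitopological group is a group with a topology for which multiplication is separately continuous (each left and right translation is continuous) and inversion $x\mapsto x^{-1}$ is continuous; no separation axioms assumed. A space is dense-connected if every dense subset of it (with the subspace topology) is connected. *)

(* Defs.v *)
From mathcomp Require Import all_boot all_order all_algebra.
From mathcomp Require Import all_classical all_reals all_analysis.
Set Implicit Arguments. Unset Strict Implicit. Unset Printing Implicit Defensive.
Local Open Scope classical_set_scope.

Definition is_group (G : Type) (mul : G -> G -> G) (inv : G -> G) (e : G) : Prop :=
  (forall x y z, mul x (mul y z) = mul (mul x y) z) /\
  (forall x, mul e x = x) /\ (forall x, mul x e = x) /\
  (forall x, mul (inv x) x = e) /\ (forall x, mul x (inv x) = e).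

Definition quasitopological_group (G : topologicalType)
    (mul : G -> G -> G) (inv : G -> G) (e : G) : Prop :=
  is_group mul inv e /\
  (forall a, continuous (mul a)) /\
  (forall a, continuous (fun x => mul x a)) /\
  continuous inv.

(* Every dense subset is connected in the subspace topology
   (mathcomp-analysis' [connected A] is connectedness of A as a subspace). *)
Definition dense_connected (G : topologicalType) : Prop :=
  forall S : set G, dense S -> connected S.

Definition setmul (G : Type) (mul : G -> G -> G) (U V : set G) : set G :=
  [set z | exists2 u, U u & exists2 v, V v & z = mul u v].

(* Main.v *)
Require Import Defs.
From mathcomp Require Import all_boot all_order all_algebra.
From mathcomp Require Import all_classical all_reals all_analysis.
Local Open Scope classical_set_scope.

Lemma preim_open_aux (T U : topologicalType) (f : T -> U) (D : set U) :
  continuous f -> open D -> open (f @^-1` D).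
Proof. by move=> cf oD; apply: open_comp => // x _; apply: cf. Qed.

Theorem theorem4p10 (G : topologicalType) (mul : G -> G -> G) (inv : G -> G) (e : G) :
  quasitopological_group mul inv e ->
  (dense_connected G <->
   forall U V : set G, open U -> U e -> open V -> V e -> setmul mul U V = setT).
Proof.
move=> [[mA [m1l [m1r [mVl mVr]]]] [cl [cr ci]]].
have inve : inv e = e by rewrite -[inv e]m1r mVl.
split.
- move=> dc U V oU Ue oV Ve; apply/seteqP; split => // g _.
  apply: contrapT => ngUV.
  have ngcl : ~ closure U g.
    move=> cg.
    have W : nbhs g ((fun x => mul (inv x) g) @^-1` V).
      apply: open_nbhs_nbhs; split.
        apply: preim_open_aux oV => x.
        exact: (continuous_comp (f:=inv) (g:=fun y => mul y g) (ci x) (cr g (inv x))).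
      by rewrite /= mVl.
    have [x [Ux Vx]] := cg _ W.
    apply: ngUV; exists x => //; exists (mul (inv x) g) => //.
    by rewrite mA mVr m1l.
  pose S := U `|` ~` closure U.
  have dS : dense S.
    move=> O [y Oy] oO.
    have [[z [Oz Uz]]|nOU] := pselect (O `&` U !=set0).
      by exists z; split => //; left.
    exists y; split => //; right => cy.
    have [z [Uz Oz]] := cy O (open_nbhs_nbhs (conj oO Oy)).
    by apply: nOU; exists z.
  have := dc S dS U (ex_intro _ e Ue).
  have h1 : exists2 C, open C & U = S `&` C.
    exists U => //; apply/seteqP; split => x.
      by move=> Ux; split => //; left.
    by case.
  have h2 : exists2 C, closed C & U = S `&` C.
    exists (closure U); first exact: closed_closure.
    apply/seteqP; split => x.
      by move=> Ux; split; [left|apply: subset_closure].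
    by case=> [[//|nc] c].
  move=> /(_ h1 h2) USE.
  have : S g by right.
  by rewrite -USE => /subset_closure.
- move=> H S dS B [a Ba] [C oC BSC] [D cD BSD].
  apply/seteqP; split; first by rewrite BSC; apply: subIsetl.
  move=> b Sb; apply: contrapT => nBb.
  have nDb : ~ D b by move=> Db; apply: nBb; rewrite BSD.
  have [Sa Ca] : (S `&` C) a by rewrite -BSC.
  pose U := mul a @^-1` C.
  pose V := (fun v => mul b (inv v)) @^-1` (~` D).
  have oU : open U by apply: preim_open_aux oC; apply: cl.
  have oV : open V.
    apply: preim_open_aux; last exact: closed_openC.
    move=> x; exact: (continuous_comp (f:=inv) (g:=mul b) (ci x) (cl b (inv x))).
  have Ue : U e by rewrite /U /= m1r.
  have Ve : V e by rewrite /V /= inve m1r.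
  have : setmul mul U V (mul (inv a) b) by rewrite H.
  move=> [u Uu [v Vv huv]].
  have hz : mul a u = mul b (inv v).
    by rewrite -[mul a u]m1r -(mVr v) mA -(mA a) -huv mA mVr m1l.
  have [s [[Cs nDs] Ss]] : (C `&` ~` D) `&` S !=set0.
    apply: dS; last exact: openI oC (closed_openC cD).
    by exists (mul a u); split => //; rewrite hz.
  have : B s by rewrite BSC.
  by rewrite BSD => -[].
Qed.
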